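(* Let $G$ be a graph (simple, connected, locally finite, with edges of arbitrary positive lengths), $\mathcal{L}(G)$ its line graph and $h:\mathcal{L}(G)\to G$ the map defined below. Then for every $x,y\in\mathcal{L}(G)$, $$d_{\mathcal{L}(G)}(x,y)\le d_G(h(x),h(y))+2\,l_{max},\qquad\text{where } l_{max}:=\sup_{e\in E(G)}L(e).$$
   Context: Graphs are regarded as geodesic metric spaces: each edge $e$ of length $L(e)$ is identified with the real interval $[0,L(e)]$, and $d_G$ is the induced shortest-path distance. The line graph $\mathcal{L}(G)$ has a vertex $V_e$ for each edge $e$ of $G$, and an edge $[V_{e_i},V_{e_j}]$ whenever $e_i\neq e_j$ and $e_i\cap e_j\neq\varnothing$, of length $(L(e_i)+L(e_j))/2$. $Pm(e)$ denotes the midpoint of $e\in E(G)$; $Pm_{\mathcal{L}}([V_{e_i},V_{e_j}])$ denotes the point of the edge $[V_{e_i},V_{e_j}]$ at distance $L(e_i)/2$ from $V_{e_i}$. The map $h$ is defined by $h(V_e)=Pm(e)$, $h(Pm_{\mathcal{L}}([V_{e_i},V_{e_j}]))=$ the vertex $e_i\cap e_j$ of $G$, and for $x_0$ in the interior of the segment from $V_e$ to $Pm_{\mathcal{L}}([V_e,V_{e_0}])$, $h(x_0)$ is the point of the half-edge of $e$ from $Pm(e)$ to the vertex $e\cap e_0$ at distance $d(x_0,V_e)$ from $Pm(e)$. *)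

(* Defs.v *)
From HB Require Import structures.
From mathcomp Require Import all_boot all_order all_algebra.
From mathcomp Require Import all_classical all_reals all_analysis.
From Stdlib Require Import Relations.

Set Implicit Arguments.
Unset Strict Implicit.
Unset Printing Implicit Defensive.

Import Order.TTheory GRing.Theory Num.Theory.
Local Open Scope classical_set_scope.
Local Open Scope ring_scope.

(* Generic metric graph: vertices, edges, each edge e is identified    *)
(* with the real interval [0, len e], 0 <-> src e, len e <-> tgt e.     *)
Record mgraph (R : realType) := MGraph {
  vtx : Type;
  edg : Type;
  src : edg -> vtx;
  tgt : edg -> vtx;
  len : edg -> R }.

(* A point of the metric graph: a vertex, or an interior gpoint (e, t),  *)
(* 0 < t < len e, at distance t from src e along e.                    *)
Definition gpoint (R : realType) (g : mgraph R) : Type :=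
  (vtx g + (edg g * R))%type.

Definition valid_point (R : realType) (g : mgraph R) (p : gpoint g) : Prop :=
  match p with
  | inl _ => True
  | inr (e, t) => 0 < t < len e
  end.

Definition on_edge (R : realType) (g : mgraph R) (p : gpoint g) (e : edg g)
    (s : R) : Prop :=
  0 <= s <= len e /\
  ((s = 0 /\ p = inl (src e)) \/ (s = len e /\ p = inl (tgt e)) \/
   (0 < s < len e /\ p = inr (e, s))).

Definition step (R : realType) (g : mgraph R) (p q : gpoint g) (l : R) : Prop :=
  exists e s s', on_edge p e s /\ on_edge q e s' /\ l = `|s - s'|.

Inductive chain (R : realType) (g : mgraph R) : gpoint g -> gpoint g -> R -> Prop :=
  | chain_nil x : chain x x 0
  | chain_cons x z y a b : step x z a -> chain z y b -> chain x y (a + b).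

Definition gdist (R : realType) (g : mgraph R) (x y : gpoint g) : \bar R :=
  ereal_inf (EFin @` [set l | chain x y l]).

Definition adjacent (V E : Type) (src tgt : E -> V) (a b : V) : Prop :=
  exists e, (src e = a /\ tgt e = b) \/ (src e = b /\ tgt e = a).

Definition simple_graph (V E : Type) (src tgt : E -> V) : Prop :=
  (forall e, src e <> tgt e) /\
  (forall e f, (src e = src f /\ tgt e = tgt f) \/ (src e = tgt f /\ tgt e = src f)
     -> e = f).

Definition connected_graph (V E : Type) (src tgt : E -> V) : Prop :=
  forall u v, clos_refl_trans V (adjacent src tgt) u v.

Definition locally_finite (V E : Type) (src tgt : E -> V) : Prop :=
  forall v, finite_set [set e | src e = v \/ tgt e = v].

Definition share (V E : Type) (src tgt : E -> V) (e f : E) : Prop :=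
  src e = src f \/ src e = tgt f \/ tgt e = src f \/ tgt e = tgt f.

Definition ledge (V E : Type) (src tgt : E -> V) : Type :=
  {s : set E | exists p : E * E,
     p.1 <> p.2 /\ share src tgt p.1 p.2 /\ s = [set p.1; p.2]}.

(* An (arbitrary, chosen) orientation [V_{e_i}, V_{e_j}] of a line-graph edge. *)
Definition ledge_pair (V E : Type) (src tgt : E -> V) (le : ledge src tgt) : E * E :=
  proj1_sig (cid (proj2_sig le)).

Definition line_graph (R : realType) (V E : Type) (src tgt : E -> V) (L : E -> R)
  : mgraph R :=
  @MGraph R E (ledge src tgt)
    (fun le => (ledge_pair le).1)
    (fun le => (ledge_pair le).2)
    (fun le => (L (ledge_pair le).1 + L (ledge_pair le).2) / 2).

Definition base_graph (R : realType) (V E : Type) (src tgt : E -> V) (L : E -> R)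
  : mgraph R := @MGraph R V E src tgt L.

(* The vertex e ∩ f of G (for distinct edges sharing an endpoint). *)
Definition common (V E : Type) (src tgt : E -> V) (e f : E) : V :=
  if pselect (src e = src f \/ src e = tgt f) then src e else tgt e.

(* Point of the half-edge of e from Pm(e) to the endpoint v, at distance d *)
(* from the midpoint Pm(e) (0 <= d < L e / 2).                            *)
Definition toward (R : realType) (V E : Type) (src tgt : E -> V) (L : E -> R)
  (e : E) (v : V) (d : R) : gpoint (base_graph src tgt L) :=
  inr (e, if pselect (v = src e) then L e / 2 - d else L e / 2 + d).

Definition hmap (R : realType) (V E : Type) (src tgt : E -> V) (L : E -> R)
  (x : gpoint (line_graph src tgt L)) : gpoint (base_graph src tgt L) :=
  match x with
  | inl e => inr (e, L e / 2)
  | inr (le, t) =>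
      let ei := (ledge_pair le).1 in
      let ej := (ledge_pair le).2 in
      let v := common src tgt ei ej in
      if t == L ei / 2 then inl v
      else if t < L ei / 2 then toward src tgt L ei v t
      else toward src tgt L ej v ((L ei + L ej) / 2 - t)
  end.

Definition lmax (R : realType) (E : Type) (L : E -> R) : \bar R :=
  ereal_sup (range (fun e => (L e)%:E)).

(* Main.v *)
Require Import Defs.
From HB Require Import structures.
From mathcomp Require Import all_boot all_order all_algebra.
From mathcomp Require Import all_classical all_reals all_analysis.
From mathcomp Require Import ring lra.

Import Order.TTheory GRing.Theory Num.Theory.
Local Open Scope classical_set_scope.
Local Open Scope ring_scope.
Set Implicit Arguments.
Unset Strict Implicit.
Unset Printing Implicit Defensive.

Section Generic.
Variables (R : realType) (g : mgraph R).

Lemma chain_app (x z y : gpoint g) a b :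
  chain x z a -> chain z y b -> chain x y (a + b).
Proof.
elim=> [x0|x0 z0 y0 a0 b0 st ch IH] H; first by rewrite add0r.
rewrite -addrA; exact: chain_cons st (IH H).
Qed.

Lemma chain_step (x y : gpoint g) a : step x y a -> chain x y a.
Proof. by move=> st; rewrite -[a]addr0; apply: chain_cons st (chain_nil _). Qed.

Lemma step_sym (x y : gpoint g) a : step x y a -> step y x a.
Proof. by case=> e [s [s' [H1 [H2 ->]]]]; exists e, s', s; split=> //; rewrite distrC. Qed.

Lemma chain_rev (x y : gpoint g) l : chain x y l -> chain y x l.
Proof.
elim=> [x0|x0 z0 y0 a0 b0 st ch IH]; first exact: chain_nil.
rewrite addrC; exact: (chain_app IH (chain_step (step_sym st))).
Qed.

Lemma chain_ge0 (x y : gpoint g) l : chain x y l -> 0 <= l.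
Proof.
elim=> // x0 z0 y0 a0 b0 [e [s [s' [_ [_ ->]]]]] _ IH.
by apply: addr_ge0.
Qed.

Hypothesis noloop : forall e, @src R g e <> @tgt R g e.
Hypothesis hpos : forall e, 0 < @len R g e.

Lemma on_edge_uniq (p : gpoint g) (e : edg g) (s s' : R) : on_edge p e s -> on_edge p e s' -> s = s'.
Proof.
move=> [_ [[-> ->]|[[-> ->]|[_ ->]]]] [_ [[-> H]|[[-> H]|[_ H]]]] //.
- by case: H => H; case: (@noloop e); rewrite H.
- by case: H => H; case: (@noloop e); rewrite H.
- by case: H.
Qed.

Lemma on_edge_inr (e0 : edg g) (t : R) (e : edg g) (s : R) : on_edge (inr (e0, t)) e s -> e = e0 /\ s = t.
Proof. by move=> [_ [[_ //]|[[_ //]|[_ [-> ->]]]]]. Qed.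

Lemma on_edge_vtx (p : gpoint g) (e : edg g) s (f : edg g) s' : on_edge p e s -> on_edge p f s' -> e <> f ->
  exists v, p = inl v.
Proof.
case: p => [v|[e0 t]] H1 H2 ne; first by exists v.
by case: ne; rewrite (on_edge_inr H1).1 (on_edge_inr H2).1.
Qed.

Lemma rho_vtx (v : vtx g) (e : edg g) (s : R) : on_edge (inl v) e s -> `|s - len e / 2| = len e / 2.
Proof.
have h := hpos e.
move=> [_ [[-> _]|[[-> _]|[_ //]]]].
  by rewrite sub0r normrN ger0_norm // divr_ge0 // ltW.
have -> : len e - len e / 2 = len e / 2 by field.
by rewrite ger0_norm // divr_ge0 // ltW.
Qed.

Lemma two_ends (u v : vtx g) (e : edg g) (s c : R) : on_edge (inl u) e s -> on_edge (inl v) e c -> u <> v ->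
  `|s - c| = len e.
Proof.
have h := hpos e.
move=> [_ [[-> [Hu]]|[[-> [Hu]]|[_ //]]]] [_ [[-> [Hv]]|[[-> [Hv]]|[_ //]]]] ne;
  try by case: ne; rewrite Hu Hv.
  by rewrite sub0r normrN ger0_norm // ltW.
by rewrite subr0 ger0_norm // ltW.
Qed.

End Generic.


Section LineG.
Variables (R : realType) (V E : Type) (src tgt : E -> V) (L : E -> R).
Hypothesis hlen : forall e, 0 < L e.

Local Notation G := (base_graph src tgt L).
Local Notation LG := (line_graph src tgt L).

Definition DL (e f : E) (B : R) :=
  exists l, @chain R LG (inl e) (inl f) l /\ l <= B.

Lemma DL_mono e f B B' : DL e f B -> B <= B' -> DL e f B'.
Proof. by move=> [l [H1 H2]] HB; exists l; split=> //; apply: le_trans HB. Qed.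

Lemma DL_trans e f k B B' : DL e f B -> DL f k B' -> DL e k (B + B').
Proof.
move=> [l [H1 H2]] [l' [H1' H2']]; exists (l + l'); split.
  exact: chain_app H1 H1'.
exact: lerD.
Qed.

Lemma pair_eq (a b e f : E) : [set e; f] = [set a; b] ->  a <> b ->
  (a = e /\ b = f) \/ (a = f /\ b = e).
Proof.
move=> H ne.
have Ha : [set e; f] a by rewrite H /setU /set1 /mkset; left.
have Hb : [set e; f] b by rewrite H /setU /set1 /mkset; right.
move: Ha Hb ne; rewrite /setU /set1 /mkset => -[->|->] -[Hb|Hb] ne.
- by case: ne; rewrite Hb.
- by left.
- by right.
- by case: ne; rewrite Hb.
Qed.

Lemma DL_adj (v : V) e f c c' :
  @on_edge R G (inl v) e c -> @on_edge R G (inl v) f c' -> DL e f ((L e + L f) / 2).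
Proof.
have he := hlen e; have hf := hlen f.
move=> He Hf.
case: (pselect (e = f)) => [<-|ne].
  exists 0; split; first exact: chain_nil.
  by rewrite divr_ge0 // addr_ge0 // ltW.
have sh : share src tgt e f.
  move: He Hf => [_ [[_ [He]]|[[_ [He]]|[_ //]]]] [_ [[_ [Hf]]|[[_ [Hf]]|[_ //]]]];
   rewrite /share -He -Hf; tauto.
pose le : ledge src tgt := exist _ [set e; f] (ex_intro _ (e, f) (conj ne (conj sh erefl))).
have Hpr := proj2_sig (cid (proj2_sig le)).
move: Hpr => [ne' [_ Hs]].
have := pair_eq Hs ne' => Hc.
exists ((L e + L f) / 2); split=> //.
apply: chain_step.
exists le.
case: Hc => [[H1 H2]|[H1 H2]].
- exists 0, ((L e + L f) / 2); split; last split.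
  + split; first by rewrite lexx divr_ge0 // addr_ge0 // ltW.
    by left; split=> //=; rewrite /ledge_pair H1.
  + split; first by rewrite /= /ledge_pair H1 H2 lexx divr_ge0 // addr_ge0 // ltW.
    by right; left; split; rewrite /= /ledge_pair ?H1 ?H2.
  + by rewrite sub0r normrN ger0_norm // divr_ge0 // addr_ge0 // ltW.
- exists ((L e + L f) / 2), 0; split; last split.
  + split; first by rewrite /= /ledge_pair H1 H2 addrC lexx divr_ge0 // addr_ge0 // ltW.
    by right; left; split; rewrite /= /ledge_pair ?H1 ?H2 // addrC.
  + split; first by rewrite lexx divr_ge0 // addr_ge0 // ltW.
    by left; split=> //=; rewrite /ledge_pair H1.
  + by rewrite subr0 ger0_norm // divr_ge0 // addr_ge0 // ltW.
Qed.

End LineG.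


Section Key.
Variables (R : realType) (V E : Type) (src tgt : E -> V) (L : E -> R).
Hypothesis hlen : forall e, 0 < L e.
Hypothesis nl : forall e, src e <> tgt e.

Local Notation G := (base_graph src tgt L).

Let uq := @on_edge_uniq R G nl.
Let rv (v : V) (e : E) s (H : @on_edge R G (inl v) e s) : `|s - L e / 2| = L e / 2 :=
  @rho_vtx R G hlen v e s H.
Let te (u v : V) (e : E) s c (H1 : @on_edge R G (inl u) e s) (H2 : @on_edge R G (inl v) e c)
  (H : u <> v) : `|s - c| = L e := @two_ends R G hlen u v e s c H1 H2 H.
Let adj := @DL_adj R V E src tgt L hlen.

Lemma DL_refl e B : 0 <= B -> DL src tgt L e e B.
Proof. by move=> hB; exists 0; split=> //; exact: chain_nil. Qed.

Lemma key (p q : gpoint G) l : chain p q l -> forall (f : E) s', on_edge q f s' ->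
 (forall (g : E) s, on_edge p g s ->
    DL src tgt L g f (`|s - L g / 2| + l + `|s' - L f / 2|)) /\
 (forall (g : E) s (v : V) c (e : E) c', on_edge p g s -> @on_edge R G (inl v) g c ->
    @on_edge R G (inl v) e c' ->
    DL src tgt L e f (L e / 2 + `|s - c| + l + `|s' - L f / 2|)).
Proof.
elim=> [x|x z y a b Hst Hch IH] f s' Hq.
  split.
    move=> g s Hp; case: (pselect (g = f)) => [eq|ne].
      subst g; rewrite (uq Hp Hq) addr0; apply: DL_refl.
      by rewrite addr_ge0.
    have [u Hu] := on_edge_vtx Hp Hq ne; subst x.
    rewrite (rv Hp) (rv Hq) addr0; apply: DL_mono (adj Hp Hq) _.
    have := hlen g; have := hlen f; lra.
  move=> g s v c e c' Hp Hv He; case: (pselect (g = f)) => [eq|ne].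
    subst g; have Hss := uq Hp Hq; subst s'.
    apply: DL_mono (adj He Hv) _.
    have h1 := rv Hv; have h2 := ler_distD s c (L f / 2); rewrite (distrC c s) in h2.
    have := hlen f; have := hlen e; lra.
  have [u Hu] := on_edge_vtx Hp Hq ne; subst x.
  case: (pselect (u = v)) => [Huv|nuv].
    subst u; have Hsc := uq Hp Hv; subst s.
    rewrite subrr normr0 (rv Hq); apply: DL_mono (adj He Hq) _.
    have := hlen f; have := hlen e; lra.
  rewrite (te Hp Hv nuv) (rv Hq).
  apply: DL_mono (DL_trans (adj He Hv) (adj Hp Hq)) _.
  have := hlen f; have := hlen e; lra.
case: Hst => h [c1 [c2 [Hx [Hz ->]]]].
have [IH1 IH2] := IH f s' Hq.
have P1 : forall (g : E) s, on_edge x g s ->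
    DL src tgt L g f (`|s - L g / 2| + (`|c1 - c2| + b) + `|s' - L f / 2|).
  move=> g s Hp; case: (pselect (g = h)) => [eq|ne].
    subst g; have Hs := uq Hp Hx; subst s.
    apply: DL_mono (IH1 h c2 Hz) _.
    have h2 := ler_distD c1 c2 (L h / 2); rewrite (distrC c2 c1) in h2; lra.
  have [u Hu] := on_edge_vtx Hp Hx ne; subst x.
  apply: DL_mono (IH2 h c2 u c1 g s Hz Hx Hp) _.
  rewrite (rv Hp) (distrC c2 c1); lra.
split=> //.
move=> g s v c e c' Hp Hv He; case: (pselect (g = h)) => [eq|ne].
  subst g; have Hs := uq Hp Hx; subst s.
  apply: DL_mono (IH2 h c2 v c e c' Hz Hv He) _.
  have h2 := ler_distD c1 c2 c; rewrite (distrC c2 c1) in h2; lra.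
have [u Hu] := on_edge_vtx Hp Hx ne; subst x.
case: (pselect (u = v)) => [Huv|nuv].
  subst u; have Hsc := uq Hp Hv; subst s.
  apply: DL_mono (IH2 h c2 v c1 e c' Hz Hx He) _.
  rewrite subrr normr0 (distrC c2 c1); lra.
rewrite (te Hp Hv nuv).
apply: DL_mono (DL_trans (adj He Hv) (P1 g s Hp)) _.
rewrite (rv Hp); have := hlen g; have := hlen e; lra.
Qed.

End Key.


Lemma xdata (R : realType) (V E : Type) (src tgt : E -> V) (L : E -> R)
  (hlen : forall e, 0 < L e) (x : gpoint (line_graph src tgt L)) :
  valid_point x -> exists (e : E) a s, @chain R (line_graph src tgt L) x (inl e) a /\
    @on_edge R (base_graph src tgt L) (hmap x) e s /\ a + `|s - L e / 2| <= L e.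
Proof.
case: x => [e|[le t]] /= Hv.
  have he := hlen e.
  exists e, 0, (L e / 2); split; first exact: chain_nil.
  split; last by rewrite subrr normr0 add0r ltW.
  split; first by rewrite /=; apply/andP; split; lra.
  by right; right; split=> //=; apply/andP; split; lra.
move: Hv; set ei := (ledge_pair le).1; set ej := (ledge_pair le).2.
set v := common src tgt ei ej.
move=> /andP [t0 tl].
have hi := hlen ei; have hj := hlen ej.
have Ot : @on_edge R (line_graph src tgt L) (inr (le, t)) le t.
  split; first by rewrite /=; apply/andP; split; lra.
  by right; right; split=> //=; apply/andP; split; lra.
have C1 : @chain R (line_graph src tgt L) (inr (le, t)) (inl ei) t.
  apply: chain_step; exists le, t, 0; split=> //; split.
    split; first by rewrite /= lexx; apply/andP; split; lra.
    by left.
  by rewrite subr0 ger0_norm // ltW.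
have C2 : @chain R (line_graph src tgt L) (inr (le, t)) (inl ej) ((L ei + L ej) / 2 - t).
  apply: chain_step; exists le, t, ((L ei + L ej) / 2); split=> //; split.
    split; first by rewrite /= lexx; apply/andP; split; lra.
    by right; left.
  by rewrite distrC ger0_norm //; lra.
case: ltgtP => Ht.
- exists ei, t, (if pselect (v = src ei) then L ei / 2 - t else L ei / 2 + t).
  split=> //; split.
    rewrite /toward; destruct (pselect (v = src ei)); (split; [rewrite /=; apply/andP; split; lra|]);
      by right; right; split=> //=; apply/andP; split; lra.
  destruct (pselect (v = src ei)).
    have -> : L ei / 2 - t - L ei / 2 = - t by ring.
    rewrite normrN ger0_norm; lra.
  have -> : L ei / 2 + t - L ei / 2 = t by ring.
  rewrite ger0_norm; lra.
- exists ej, ((L ei + L ej) / 2 - t),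
    (if pselect (v = src ej) then L ej / 2 - ((L ei + L ej) / 2 - t)
     else L ej / 2 + ((L ei + L ej) / 2 - t)).
  split=> //; split.
    rewrite /toward; destruct (pselect (v = src ej)); (split; [rewrite /=; apply/andP; split; lra|]);
      by right; right; split=> //=; apply/andP; split; lra.
  destruct (pselect (v = src ej)).
    have -> : L ej / 2 - ((L ei + L ej) / 2 - t) - L ej / 2 = - ((L ei + L ej) / 2 - t) by ring.
    rewrite normrN ger0_norm; lra.
  have -> : L ej / 2 + ((L ei + L ej) / 2 - t) - L ej / 2 = (L ei + L ej) / 2 - t by ring.
  rewrite ger0_norm; lra.
- exists ei, t, (if pselect (src ei = src ej \/ src ei = tgt ej) then 0 else L ei).
  split=> //; split.
    rewrite /v /common; destruct (pselect (src ei = src ej \/ src ei = tgt ej)).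
      by split; [rewrite /= lexx; apply/andP; split; lra | left].
    by split; [rewrite /= lexx; apply/andP; split; lra | right; left].
  destruct (pselect (src ei = src ej \/ src ei = tgt ej)).
    rewrite sub0r normrN ger0_norm; lra.
  have -> : L ei - L ei / 2 = L ei / 2 by field.
  rewrite ger0_norm; lra.
Qed.


Unset Implicit Arguments.
Set Strict Implicit.

Theorem mainTheorem2 (R : realType) (V E : Type) (src tgt : E -> V) (L : E -> R)
  (hsimple : simple_graph src tgt)
  (hconn : connected_graph src tgt)
  (hlocfin : locally_finite src tgt)
  (hlen : forall e, 0 < L e)
  (x y : gpoint (line_graph src tgt L)) :
  valid_point x -> valid_point y ->
  (gdist x y <= gdist (hmap x) (hmap y) + 2%:E * lmax L)%E.
Proof.
move=> Hx Hy.
have nl : forall e, src e <> tgt e := proj1 hsimple.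
have [ex [ax [sx [Cx [Ox Bx]]]]] := xdata hlen Hx.
have [ey [ay [sy [Cy [Oy By]]]]] := xdata hlen Hy.
have Cy' := chain_rev Cy.
have Lb : forall e, ((L e)%:E <= lmax L)%E.
  by move=> e; apply: ereal_sup_ubound; exists e.
have main : forall c, chain (hmap x) (hmap y) c ->
    (gdist x y <= (c + L ex + L ey)%:E)%E.
  move=> c Hc.
  have [K1 _] := key hlen nl Hc Oy.
  have [l [Cl Hl]] := K1 ex sx Ox.
  have Cxy := chain_app Cx (chain_app Cl Cy').
  have H1 : (gdist x y <= (ax + (l + ay))%:E)%E.
    by apply: ereal_inf_lbound; exists (ax + (l + ay)).
  apply: le_trans H1 _; rewrite lee_fin; lra.
have G0 : (0 <= gdist (hmap x) (hmap y))%E.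
  apply: le_ereal_inf_tmp => _ [l Hl <-]; rewrite lee_fin; exact: chain_ge0 Hl.
case Hm: (lmax L) => [M| |].
- have LM : forall e, L e <= M by move=> e; have := Lb e; rewrite Hm lee_fin.
  rewrite -EFinM -leeBlDr //.
  apply: le_ereal_inf_tmp => _ [c Hc <-].
  rewrite leeBlDr // -EFinD.
  apply: le_trans (main c Hc) _; rewrite lee_fin.
  have := LM ex; have := LM ey; lra.
- rewrite gt0_muley ?lte_fin // addey ?leey //.
  by apply/negP => /eqP H; rewrite H in G0.
- by have := Lb ex; rewrite Hm leeNy_eq.
Qed.
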